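(* Let $V$ be a complex normed vector space, $x=\{x_n\}_{n=1}^\infty\in l^{\infty}(V)$ and $v\in V$. If $x$ is strongly almost convergent to $v$, then $x$ is weakly almost convergent to $v$.
   Context: $\mathbb{N}=\{1,2,3,\dots\}$. $l^{\infty}(V)$ is the space of bounded sequences $x=\{x_n\}_{n=1}^\infty$ in $V$ with norm $\|x\|_\infty=\sup_n\|x_n\|_V$. For $v\in V$, $\widetilde v=\{v,v,\dots\}$. $T$ is the left shift: $T\{x_1,x_2,\dots\}=\{x_2,x_3,\dots\}$. A Banach limit functional is a bounded linear functional $L$ on $l^\infty(V)$ with $\|L\|\le1$ and $L(Tx)=L(x)$ for all $x$. A sequence $x\in l^\infty(V)$ is strongly almost convergent to $v\in V$ if $L(x)=L(\widetilde v)$ for every Banach limit functional $L$. A bounded complex sequence $\{a_n\}$ is almost convergent to $a\in\mathbb{C}$ if $\sup_{j\in\mathbb{N}}\left|\frac1n\sum_{i=0}^{n-1}a_{i+j}-a\right|\to0$ as $n\to\infty$. $x\in l^\infty(V)$ is weakly almost convergent to $v$ if for every $f\in V^*$ the scalar sequence $\{f(x_n)\}_{n=1}^\infty$ is almost convergent to $f(v)$. *)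

(* Defs.v *)
From Stdlib Require Import Reals.
Open Scope R_scope.

Record C := mkC { Cre : R ; Cim : R }.
Definition C0 : C := mkC 0 0.
Definition C1 : C := mkC 1 0.
Definition Cadd (a b : C) : C := mkC (Cre a + Cre b) (Cim a + Cim b).
Definition Copp (a : C) : C := mkC (- Cre a) (- Cim a).
Definition Csub (a b : C) : C := Cadd a (Copp b).
Definition Cmul (a b : C) : C :=
  mkC (Cre a * Cre b - Cim a * Cim b) (Cre a * Cim b + Cim a * Cre b).
Definition Cmod (a : C) : R := sqrt (Cre a * Cre a + Cim a * Cim a).
Definition RtoC (r : R) : C := mkC r 0.

Fixpoint Csum_from (a : nat -> C) (j n : nat) : C :=
  match n with
  | O => C0
  | S k => Cadd (Csum_from a j k) (a (k + j)%nat)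
  end.

Record CNormedSpace := {
  carrier :> Type ;
  vzero : carrier ;
  vadd : carrier -> carrier -> carrier ;
  vopp : carrier -> carrier ;
  vscal : C -> carrier -> carrier ;
  vnorm : carrier -> R ;
  vadd_assoc : forall x y z, vadd x (vadd y z) = vadd (vadd x y) z ;
  vadd_comm : forall x y, vadd x y = vadd y x ;
  vadd_0 : forall x, vadd x vzero = x ;
  vadd_opp : forall x, vadd x (vopp x) = vzero ;
  vscal_1 : forall x, vscal C1 x = x ;
  vscal_assoc : forall a b x, vscal a (vscal b x) = vscal (Cmul a b) x ;
  vscal_distr_v : forall a x y, vscal a (vadd x y) = vadd (vscal a x) (vscal a y) ;
  vscal_distr_s : forall a b x, vscal (Cadd a b) x = vadd (vscal a x) (vscal b x) ;
  vnorm_nonneg : forall x, 0 <= vnorm x ;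
  vnorm_eq0 : forall x, vnorm x = 0 -> x = vzero ;
  vnorm_scal : forall a x, vnorm (vscal a x) = Cmod a * vnorm x ;
  vnorm_triangle : forall x y, vnorm (vadd x y) <= vnorm x + vnorm y
}.

Arguments vzero {c}.
Arguments vadd {c}.
Arguments vscal {c}.
Arguments vnorm {c}.

Section Defs.
Variable V : CNormedSpace.

(* Sequences x = {x_n}_{n>=1} are represented 0-based: x k stands for x_{k+1}. *)
Definition seqV := nat -> V.

Definition bounded_seq (x : seqV) : Prop :=
  exists M, forall n, vnorm (x n) <= M.

Definition sup_norm_le (x : seqV) (M : R) : Prop :=
  forall n, vnorm (x n) <= M.

Definition const_seq (v : V) : seqV := fun _ => v.
Definition shift (x : seqV) : seqV := fun n => x (S n).
Definition seq_add (x y : seqV) : seqV := fun n => vadd (x n) (y n).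
Definition seq_scal (a : C) (x : seqV) : seqV := fun n => vscal a (x n).

(* A functional on l^∞(V); only its values on bounded sequences matter. *)
Definition banach_limit_functional (L : seqV -> C) : Prop :=
  (forall x y, bounded_seq x -> bounded_seq y ->
      L (seq_add x y) = Cadd (L x) (L y)) /\
  (forall a x, bounded_seq x -> L (seq_scal a x) = Cmul a (L x)) /\
  (* ‖L‖ ≤ 1 *)
  (forall x M, sup_norm_le x M -> Cmod (L x) <= M) /\
  (forall x, bounded_seq x -> L (shift x) = L x).

Definition strongly_almost_convergent (x : seqV) (v : V) : Prop :=
  forall L, banach_limit_functional L -> L x = L (const_seq v).

Definition dual_elem (f : V -> C) : Prop :=
  (forall u w, f (vadd u w) = Cadd (f u) (f w)) /\
  (forall a u, f (vscal a u) = Cmul a (f u)) /\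
  (exists K, forall u, Cmod (f u) <= K * vnorm u).

End Defs.

Definition almost_convergent (a : nat -> C) (l : C) : Prop :=
  (exists M, forall n, Cmod (a n) <= M) /\
  forall eps, 0 < eps -> exists N, forall n, (N <= n)%nat -> (0 < n)%nat ->
    forall j, Cmod (Csub (Cmul (RtoC (/ INR n)) (Csum_from a j n)) l) <= eps.

Definition weakly_almost_convergent (V : CNormedSpace) (x : seqV V) (v : V) : Prop :=
  forall f, dual_elem V f -> almost_convergent (fun n => f (x n)) (f v).

(* Main.v *)
Require Import Defs.
From Stdlib Require Import Reals Lra Lia Psatz ZArith Classical ClassicalEpsilon FunctionalExtensionality PropExtensionality.
Import Defs.
Open Scope R_scope.

Definition sub {T : Type} (A B : T -> Prop) := forall t, A t -> B t.

Inductive Tw {T : Type} (base : T -> Prop) (sc : (T -> Prop) -> (T -> Prop)) : (T -> Prop) -> Prop :=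
| Tw_base : Tw base sc base
| Tw_succ : forall F, Tw base sc F -> Tw base sc (sc F)
| Tw_union : forall C : (T -> Prop) -> Prop, (forall F, C F -> Tw base sc F) ->
    Tw base sc (fun t => base t \/ exists F, C F /\ F t).

Lemma sub_eq {T : Type} (A B : T -> Prop) : sub A B -> sub B A -> A = B.
Proof.
  intros H1 H2; apply functional_extensionality; intro t;
  apply propositional_extensionality; split; auto.
Qed.

Lemma Tw_base_sub {T} base sc (F : T -> Prop) :
  (forall G, sub G (sc G)) -> Tw base sc F -> sub base F.
Proof.
  intros infl H; induction H as [|F HF IH|C HC IH]; intros t Ht. exact Ht. apply infl, IH, Ht. left; exact Ht.
Qed.

Definition extreme {T} base sc (c : T -> Prop) :=
  forall x, Tw base sc x -> sub x c -> sub c x \/ sub (sc x) c.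

Lemma Tw_lemma1 {T} base sc (c : T -> Prop) :
  (forall G, sub G (sc G)) -> extreme base sc c -> Tw base sc c ->
  forall x, Tw base sc x -> sub x c \/ sub (sc c) x.
Proof.
  intros infl Ec Tc x Hx; induction Hx as [|F HF IH|C HC IH].
  - left; apply (Tw_base_sub base sc c infl Tc).
  - destruct IH as [H|H].
    + destruct (Ec F HF H) as [H'|H'].
      * assert (F = c) by (apply sub_eq; auto). subst F.
        right; intros t Ht; exact Ht.
      * left; exact H'.
    + right; intros t Ht; apply infl, H, Ht.
  - destruct (classic (forall F, C F -> sub F c)) as [Hall|Hn].
    + left; intros t [Ht|[F [HF Ht]]].
      * apply (Tw_base_sub base sc c infl Tc), Ht.
      * apply (Hall F HF), Ht.
    + apply not_all_ex_not in Hn; destruct Hn as [F Hn].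
      apply imply_to_and in Hn; destruct Hn as [HF Hn].
      destruct (IH F HF) as [H|H]; [contradiction|].
      right; intros t Ht; right; exists F; split; auto.
Qed.

Lemma Tw_extreme {T} base sc (c : T -> Prop) :
  (forall G, sub G (sc G)) -> Tw base sc c -> extreme base sc c.
Proof.
  intros infl Hc; induction Hc as [|c Hc IHc|C HC IH].
  - intros x Hx Hsub; left; apply (Tw_base_sub base sc x infl Hx).
  - intros x Hx Hsub.
    destruct (Tw_lemma1 base sc c infl IHc Hc x Hx) as [H|H].
    + destruct (IHc x Hx H) as [H'|H'].
      * assert (x = c) by (apply sub_eq; auto). subst x.
        right; intros t Ht; exact Ht.
      * right; intros t Ht; apply infl, H', Ht.
    + left; exact H.
  - intros x Hx Hsub.
    destruct (classic (forall F, C F -> sub F x)) as [Hall|Hn].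
    + left; intros t [Ht|[F [HF Ht]]].
      * apply (Tw_base_sub base sc x infl Hx), Ht.
      * apply (Hall F HF), Ht.
    + apply not_all_ex_not in Hn; destruct Hn as [F Hn].
      apply imply_to_and in Hn; destruct Hn as [HF Hn].
      destruct (Tw_lemma1 base sc F infl (IH F HF) (HC F HF) x Hx) as [H|H].
      * destruct (IH F HF x Hx H) as [H'|H']; [contradiction|].
        right; intros t Ht; right; exists F; split; auto.
      * exfalso; apply Hn; intros t Ht; apply H, infl, Ht.
Qed.

Lemma Tw_chain {T} base sc (x c : T -> Prop) :
  (forall G, sub G (sc G)) -> Tw base sc x -> Tw base sc c -> sub x c \/ sub c x.
Proof.
  intros infl Hx Hc.
  destruct (Tw_lemma1 base sc c infl (Tw_extreme base sc c infl Hc) Hc x Hx) as [H|H]; auto.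
  right; intros t Ht; apply H, infl, Ht.
Qed.

Lemma zorn_sets {T : Type} (good : (T -> Prop) -> Prop) (base : T -> Prop) :
  good base ->
  (forall C : (T -> Prop) -> Prop, (forall F, C F -> good F) ->
     (forall F G, C F -> C G -> sub F G \/ sub G F) ->
     good (fun t => base t \/ exists F, C F /\ F t)) ->
  exists M, good M /\ sub base M /\ forall G, good G -> sub M G -> sub G M.
Proof.
  intros gb gu.
  set (P := fun F G => good G /\ sub F G /\ ~ sub G F).
  set (sc := fun F => match excluded_middle_informative (exists G, P F G) with
                      | left H => proj1_sig (constructive_indefinite_description _ H)
                      | right _ => F end).
  assert (infl : forall F, sub F (sc F)).
  { intros F; unfold sc; destruct excluded_middle_informative as [H|H].
    - destruct (proj2_sig (constructive_indefinite_description _ H)) as [_ [HG _]]; exact HG.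
    - intros t Ht; exact Ht. }
  assert (Hg : forall F, Tw base sc F -> good F).
  { intros F HF; induction HF as [|F HF IH|C HC IH].
    - exact gb.
    - unfold sc; destruct excluded_middle_informative as [H|H].
      + destruct (proj2_sig (constructive_indefinite_description _ H)) as [HG _]; exact HG.
      + exact IH.
    - apply gu; auto. intros F G HF HG; apply (Tw_chain base sc); auto. }
  set (M := fun t => base t \/ exists F, Tw base sc F /\ F t).
  assert (TM : Tw base sc M) by (apply Tw_union; auto).
  exists M; split; [apply Hg; exact TM|split].
  - intros t Ht; left; exact Ht.
  - intros G HG HMG. apply NNPP; intro HGM.
    assert (Hs : sub (sc M) M).
    { intros t Ht; right; exists (sc M); split; auto. apply Tw_succ, TM. }
    revert Hs; unfold sc; destruct excluded_middle_informative as [H|H].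
    + destruct (proj2_sig (constructive_indefinite_description _ H)) as [_ [_ HG2]]; exact HG2.
    + exfalso; apply H; exists G; repeat split; auto.
Qed.

Definition gfilt (F : (nat -> Prop) -> Prop) :=
 (forall A B, F A -> (forall n, A n -> B n) -> F B) /\
 (forall A B, F A -> F B -> F (fun n => A n /\ B n)) /\
 (forall A, F A -> exists n, A n) /\
 (forall N, F (fun n => (N <= n)%nat)).

Definition cofin (A : nat -> Prop) := exists N, forall n, (N <= n)%nat -> A n.

Lemma cofin_good : gfilt cofin.
Proof.
  repeat split.
  - intros A B [N HN] H; exists N; auto.
  - intros A B [N HN] [M HM]; exists (max N M); intros n Hn; split;
      [apply HN|apply HM]; lia.
  - intros A [N HN]; exists N; apply HN; lia.
  - intros N; exists N; auto.
Qed.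

Lemma ultrafilter_exists : exists U, gfilt U /\ forall A, U A \/ U (fun n => ~ A n).
Proof.
  destruct (zorn_sets gfilt cofin cofin_good) as [M [GM [_ MaxM]]].
  - intros C HC Hch.
    assert (Hin : forall A, (cofin A \/ exists F, C F /\ F A) ->
               exists F, gfilt F /\ (forall B, cofin B \/ (exists F, C F /\ F B) -> F B \/ ~ F B) /\ F A).
    { intros A [HA|[F [HF HA]]].
      - exists cofin; split; [exact cofin_good|split; auto]. intros; apply classic.
      - exists F; split; [auto|split; auto]. intros; apply classic. }
    assert (Hcof : forall F A, gfilt F -> cofin A -> F A).
    { intros F A [Hup [_ [_ Ht]]] [N HN]; eapply Hup; [apply (Ht N)|exact HN]. }
    repeat split.
    + intros A B [HA|[F [HF HA]]] Hs.
      * left; destruct cofin_good as [Hup _]; eapply Hup; eauto.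
      * right; exists F; split; auto; destruct (HC F HF) as [Hup _]; eapply Hup; eauto.
    + intros A B [HA|[F [HF HA]]] [HB|[G [HG HB]]].
      * left; destruct cofin_good as [_ [Hi _]]; auto.
      * right; exists G; split; auto; destruct (HC G HG) as [_ [Hi _]]; apply Hi; auto.
        apply Hcof; auto.
      * right; exists F; split; auto; destruct (HC F HF) as [_ [Hi _]]; apply Hi; auto.
        apply Hcof; auto.
      * destruct (Hch F G HF HG) as [Hs|Hs].
        -- right; exists G; split; auto; destruct (HC G HG) as [_ [Hi _]]; apply Hi; auto.
        -- right; exists F; split; auto; destruct (HC F HF) as [_ [Hi _]]; apply Hi; auto.
    + intros A [HA|[F [HF HA]]].
      * destruct cofin_good as [_ [_ [Hne _]]]; auto.
      * destruct (HC F HF) as [_ [_ [Hne _]]]; auto.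
    + intros N; left; exists N; auto.
  - exists M; split; [exact GM|]. intros A.
    destruct GM as [Hup [Hi [Hne Ht]]].
    destruct (classic (exists B, M B /\ forall n, B n -> ~ A n)) as [[B [HB HBA]]|Hno].
    + right; eapply Hup; eauto.
    + left.
      set (G := fun B => exists C, M C /\ forall n, C n -> A n -> B n).
      assert (GG : gfilt G).
      { repeat split.
        - intros B1 B2 [C [HC HCB]] Hs; exists C; split; auto.
        - intros B1 B2 [C1 [HC1 H1]] [C2 [HC2 H2]]; exists (fun n => C1 n /\ C2 n); split; auto.
          intros n [Hn1 Hn2] Ha; split; auto.
        - intros B [C [HC HCB]].
          apply NNPP; intro Hn; apply Hno; exists C; split; auto.
          intros n Hc Ha; apply Hn; exists n; auto.
        - intros N; exists (fun n => (N <= n)%nat); split; auto. }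
      assert (sub M G) by (intros C HC; exists C; split; auto).
      apply (MaxM G GG H). exists (fun n => (0 <= n)%nat); split; auto.
Qed.

Lemma C_ext (a b : C) : Cre a = Cre b -> Cim a = Cim b -> a = b.
Proof. destruct a, b; simpl; intros; subst; reflexivity. Qed.

Ltac Ceq := apply C_ext; simpl; ring.

Lemma Cmod_sq (a : C) : Cmod a * Cmod a = Cre a * Cre a + Cim a * Cim a.
Proof. unfold Cmod; apply sqrt_sqrt; nra. Qed.

Lemma Cmod_ge0 (a : C) : 0 <= Cmod a.
Proof. unfold Cmod; apply sqrt_pos. Qed.

Lemma Cre_le (a : C) : Rabs (Cre a) <= Cmod a.
Proof.
  pose proof (Cmod_sq a); pose proof (Cmod_ge0 a).
  apply Rsqr_incr_0_var; [|auto]. rewrite <- Rsqr_abs; unfold Rsqr; nra.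
Qed.

Lemma Cim_le (a : C) : Rabs (Cim a) <= Cmod a.
Proof.
  pose proof (Cmod_sq a); pose proof (Cmod_ge0 a).
  apply Rsqr_incr_0_var; [|auto]. rewrite <- Rsqr_abs; unfold Rsqr; nra.
Qed.

Lemma Cmod_le_sum (a : C) : Cmod a <= Rabs (Cre a) + Rabs (Cim a).
Proof.
  pose proof (Cmod_sq a); pose proof (Cmod_ge0 a).
  pose proof (Rabs_pos (Cre a)); pose proof (Rabs_pos (Cim a)).
  apply Rsqr_incr_0_var; [|lra]. unfold Rsqr. rewrite H.
  assert (Rabs (Cre a) * Rabs (Cre a) = Cre a * Cre a) by (rewrite <- Rabs_mult; apply Rabs_right; nra).
  assert (Rabs (Cim a) * Rabs (Cim a) = Cim a * Cim a) by (rewrite <- Rabs_mult; apply Rabs_right; nra).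
  nra.
Qed.

Lemma Cmod_triangle (a b : C) : Cmod (Cadd a b) <= Cmod a + Cmod b.
Proof.
  pose proof (Cmod_sq a); pose proof (Cmod_ge0 a).
  pose proof (Cmod_sq b); pose proof (Cmod_ge0 b).
  pose proof (Cmod_sq (Cadd a b)); pose proof (Cmod_ge0 (Cadd a b)).
  simpl in H3.
  destruct a as [a1 a2], b as [b1 b2]; simpl in *.
  assert (HCS : a1 * b1 + a2 * b2 <= Cmod (mkC a1 a2) * Cmod (mkC b1 b2)).
  { set (p := Cmod (mkC a1 a2)) in *; set (q := Cmod (mkC b1 b2)) in *.
    assert (0 <= p * q) by nra.
    assert ((p*q)*(p*q) = (a1*a1+a2*a2)*(b1*b1+b2*b2)) by (rewrite <- H, <- H1; ring).
    assert ((a1*b1+a2*b2)*(a1*b1+a2*b2) <= (p*q)*(p*q)).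
    { rewrite H6. assert (0 <= (a1*b2-a2*b1)*(a1*b2-a2*b1)) by apply Rle_0_sqr. nra. }
    destruct (Rle_dec (a1*b1+a2*b2) (p*q)) as [|Hn]; auto.
    exfalso. assert (p*q < a1*b1+a2*b2) by lra. nra. }
  apply Rsqr_incr_0_var; [|lra]. unfold Rsqr. nra.
Qed.

Lemma Cmod_mul (a b : C) : Cmod (Cmul a b) = Cmod a * Cmod b.
Proof.
  unfold Cmod; rewrite <- sqrt_mult by nra. f_equal. simpl. ring.
Qed.

Lemma Cmod_RtoC (r : R) : Cmod (RtoC r) = Rabs r.
Proof.
  unfold Cmod; simpl. rewrite Rmult_0_l, Rplus_0_r. apply sqrt_Rsqr_abs.
Qed.

Lemma Cmod_sub_sym (a b : C) : Cmod (Csub a b) = Cmod (Csub b a).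
Proof. unfold Cmod; simpl; f_equal; ring. Qed.

Lemma Cmod_C0 : Cmod C0 = 0.
Proof. unfold Cmod; simpl. rewrite Rmult_0_l, Rplus_0_r. apply sqrt_0. Qed.

Lemma Cmod_small_eq (a b : C) : (forall eps, 0 < eps -> Cmod (Csub a b) < eps) -> a = b.
Proof.
  intros H. pose proof (fun e he => Rle_lt_trans _ _ _ (Cre_le _) (H e he)) as H1.
  pose proof (fun e he => Rle_lt_trans _ _ _ (Cim_le _) (H e he)) as H2.
  simpl in H1, H2.
  apply C_ext.
  - destruct (Req_dec (Cre a) (Cre b)) as [E|E]; auto.
    exfalso. specialize (H1 (Rabs (Cre a + - Cre b))). 
    assert (0 < Rabs (Cre a + - Cre b)) by (apply Rabs_pos_lt; lra). lra.
  - destruct (Req_dec (Cim a) (Cim b)) as [E|E]; auto.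
    exfalso. specialize (H2 (Rabs (Cim a + - Cim b))).
    assert (0 < Rabs (Cim a + - Cim b)) by (apply Rabs_pos_lt; lra). lra.
Qed.

Lemma Rabs_le_inv' x M : Rabs x <= M -> - M <= x <= M.
Proof. unfold Rabs; destruct Rcase_abs; lra. Qed.

Definition rl (U : (nat -> Prop) -> Prop) (b : nat -> R) r :=
  forall eps, 0 < eps -> U (fun k => Rabs (b k - r) < eps).
Definition cl (U : (nat -> Prop) -> Prop) (c : nat -> C) r :=
  forall eps, 0 < eps -> U (fun k => Cmod (Csub (c k) r) < eps).

Lemma rl_exists U (b : nat -> R) M : gfilt U -> (forall A, U A \/ U (fun n => ~ A n)) ->
  (forall k, Rabs (b k) <= M) -> exists r, rl U b r.
Proof.
  intros [Hup [Hi [Hne Ht]]] Hu Hb.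
  set (E := fun r => U (fun k => r <= b k)).
  assert (HE1 : bound E).
  { exists M; intros r Hr. destruct (Hne _ Hr) as [k Hk].
    specialize (Hb k). apply Rabs_le_inv' in Hb. lra. }
  assert (HE2 : exists r, E r).
  { exists (-M); unfold E. eapply Hup; [apply (Ht 0%nat)|].
    intros k _; specialize (Hb k); apply Rabs_le_inv' in Hb; lra. }
  destruct (completeness E HE1 HE2) as [s [Hub Hlub]].
  exists s; intros eps Heps.
  assert (A1 : U (fun k => s - eps < b k)).
  { destruct (classic (exists r, E r /\ s - eps < r)) as [[r [Hr Hr2]]|Hno].
    - eapply Hup; [exact Hr|]. intros k Hk; lra.
    - exfalso. assert (s <= s - eps); [|lra].
      apply Hlub. intros r Hr. apply Rnot_lt_le; intro; apply Hno; exists r; auto. }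
  assert (A2 : U (fun k => b k < s + eps)).
  { destruct (Hu (fun k => s + eps/2 <= b k)) as [H|H].
    - exfalso. assert (s + eps/2 <= s) by (apply Hub; exact H). lra.
    - eapply Hup; [exact H|]. intros k Hk; simpl in Hk; lra. }
  eapply Hup; [apply (Hi _ _ A1 A2)|]. intros k [H1 H2]. apply Rabs_def1; lra.
Qed.

Lemma cl_exists U (c : nat -> C) M : gfilt U -> (forall A, U A \/ U (fun n => ~ A n)) ->
  (forall k, Cmod (c k) <= M) -> exists r, cl U c r.
Proof.
  intros GU Hu Hb.
  destruct (rl_exists U (fun k => Cre (c k)) M GU Hu) as [r1 H1].
  { intros k; eapply Rle_trans; [apply Cre_le|apply Hb]. }
  destruct (rl_exists U (fun k => Cim (c k)) M GU Hu) as [r2 H2].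
  { intros k; eapply Rle_trans; [apply Cim_le|apply Hb]. }
  exists (mkC r1 r2). intros eps Heps.
  destruct GU as [Hup [Hi _]].
  eapply Hup; [apply (Hi _ _ (H1 (eps/2) ltac:(lra)) (H2 (eps/2) ltac:(lra)))|].
  intros k [Ha Hb2]. eapply Rle_lt_trans; [apply Cmod_le_sum|]. simpl. unfold Rminus in Ha, Hb2. lra.
Qed.

Lemma cl_unique U c r r' : gfilt U -> cl U c r -> cl U c r' -> r = r'.
Proof.
  intros [Hup [Hi [Hne _]]] H1 H2. apply Cmod_small_eq. intros eps Heps.
  destruct (Hne _ (Hi _ _ (H1 (eps/2) ltac:(lra)) (H2 (eps/2) ltac:(lra)))) as [k [Ha Hb]].
  replace (Csub r r') with (Cadd (Csub r (c k)) (Csub (c k) r')) by Ceq.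
  eapply Rle_lt_trans; [apply Cmod_triangle|]. rewrite Cmod_sub_sym. lra.
Qed.

Lemma cl_ext U c d r : (forall k, c k = d k) -> cl U c r -> cl U d r.
Proof.
  intros E H eps Heps. specialize (H eps Heps).
  replace (fun k => Cmod (Csub (d k) r) < eps) with (fun k => Cmod (Csub (c k) r) < eps); auto.
  apply functional_extensionality; intro k; rewrite E; auto.
Qed.

Lemma cl_add U c d r s : gfilt U -> cl U c r -> cl U d s ->
  cl U (fun k => Cadd (c k) (d k)) (Cadd r s).
Proof.
  intros [Hup [Hi _]] H1 H2 eps Heps.
  eapply Hup; [apply (Hi _ _ (H1 (eps/2) ltac:(lra)) (H2 (eps/2) ltac:(lra)))|].
  intros k [Ha Hb]. simpl.
  replace (Csub (Cadd (c k) (d k)) (Cadd r s)) with (Cadd (Csub (c k) r) (Csub (d k) s)) by Ceq.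
  eapply Rle_lt_trans; [apply Cmod_triangle|]. lra.
Qed.

Lemma cl_scal U c r a : gfilt U -> cl U c r -> cl U (fun k => Cmul a (c k)) (Cmul a r).
Proof.
  intros [Hup _] H eps Heps.
  pose proof (Cmod_ge0 a).
  assert (He : 0 < eps / (Cmod a + 1)) by (apply Rdiv_lt_0_compat; lra).
  eapply Hup; [apply (H _ He)|]. intros k Hk. simpl.
  replace (Csub (Cmul a (c k)) (Cmul a r)) with (Cmul a (Csub (c k) r)) by Ceq.
  rewrite Cmod_mul.
  assert (eps / (Cmod a + 1) * (Cmod a + 1) = eps) by (field; lra).
  pose proof (Cmod_ge0 (Csub (c k) r)). nra.
Qed.

Lemma cl_bound U c r M : gfilt U -> cl U c r -> (forall k, Cmod (c k) <= M) -> Cmod r <= M.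
Proof.
  intros [_ [_ [Hne _]]] H Hb. apply Rnot_lt_le; intro Hlt.
  destruct (Hne _ (H (Cmod r - M) ltac:(lra))) as [k Hk].
  replace r with (Cadd (c k) (Csub r (c k))) in Hlt by Ceq.
  pose proof (Cmod_triangle (c k) (Csub r (c k))). rewrite Cmod_sub_sym in Hk.
  specialize (Hb k).
  replace (Cadd (c k) (Csub r (c k))) with r in * by Ceq. lra.
Qed.

Lemma cl_near U c d r : gfilt U -> cl U c r ->
  (forall eps, 0 < eps -> exists N, forall k, (N <= k)%nat -> Cmod (Csub (d k) (c k)) < eps) ->
  cl U d r.
Proof.
  intros [Hup [Hi [_ Ht]]] H Hn eps Heps.
  destruct (Hn (eps/2) ltac:(lra)) as [N HN].
  eapply Hup; [apply (Hi _ _ (H (eps/2) ltac:(lra)) (Ht N))|].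
  intros k [Ha Hb]. specialize (HN k Hb).
  replace (Csub (d k) r) with (Cadd (Csub (d k) (c k)) (Csub (c k) r)) by Ceq.
  eapply Rle_lt_trans; [apply Cmod_triangle|]. lra.
Qed.

Lemma cl_const U a : gfilt U -> cl U (fun _ => a) a.
Proof.
  intros [Hup [_ [_ Ht]]] eps Heps. eapply Hup; [apply (Ht 0%nat)|].
  intros k _. replace (Csub a a) with C0 by Ceq. rewrite Cmod_C0; lra.
Qed.

Lemma cl_far U c r l e : gfilt U -> cl U c r -> 0 < e ->
  (forall k, e < Cmod (Csub (c k) l)) -> r <> l.
Proof.
  intros [_ [_ [Hne _]]] H He Hf E. subst r.
  destruct (Hne _ (H e He)) as [k Hk]. specialize (Hf k). lra.
Qed.

Lemma nat_unbounded r : exists N : nat, r < INR N.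
Proof.
  destruct (archimed r) as [H _].
  destruct (Z_lt_le_dec (up r) 0) as [Hz|Hz].
  - exists 0%nat. simpl. apply IZR_lt in Hz. lra.
  - exists (Z.to_nat (up r)). rewrite INR_IZR_INZ, Z2Nat.id; auto.
Qed.

Lemma Csum_ext a b j n : (forall i, a i = b i) -> Csum_from a j n = Csum_from b j n.
Proof. intros E; induction n; simpl; [reflexivity|rewrite IHn, E; reflexivity]. Qed.

Lemma Csum_add a b j n :
  Csum_from (fun i => Cadd (a i) (b i)) j n = Cadd (Csum_from a j n) (Csum_from b j n).
Proof. induction n; simpl; [Ceq|rewrite IHn; Ceq]. Qed.

Lemma Csum_scal c a j n : Csum_from (fun i => Cmul c (a i)) j n = Cmul c (Csum_from a j n).
Proof. induction n; simpl; [Ceq|rewrite IHn; Ceq]. Qed.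

Lemma Csum_const c j n : Csum_from (fun _ => c) j n = Cmul (RtoC (INR n)) c.
Proof. induction n; simpl Csum_from; [simpl; Ceq|rewrite IHn, S_INR; Ceq]. Qed.

Lemma Csum_bound a j n M : (forall i, Cmod (a i) <= M) -> Cmod (Csum_from a j n) <= INR n * M.
Proof.
  intros H; induction n; simpl Csum_from.
  - rewrite Cmod_C0; simpl; lra.
  - rewrite S_INR. eapply Rle_trans; [apply Cmod_triangle|]. specialize (H (n + j)%nat). lra.
Qed.

Lemma Csum_succ a j n : Csum_from a j (S n) = Cadd (a j) (Csum_from a (S j) n).
Proof.
  induction n.
  - simpl; Ceq.
  - change (Csum_from a j (S (S n))) with (Cadd (Csum_from a j (S n)) (a (S n + j)%nat)).
    rewrite IHn. simpl Csum_from. replace (S n + j)%nat with (n + S j)%nat by lia. Ceq.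
Qed.

Lemma Csum_shiftf a j n : Csum_from (fun i => a (S i)) j n = Csum_from a (S j) n.
Proof.
  induction n; simpl; [reflexivity|]. rewrite IHn. replace (S (n + j)) with (n + S j)%nat by lia.
  reflexivity.
Qed.

Lemma Csum_diff a j n r :
  Csub (Cmul r (Csum_from a (S j) n)) (Cmul r (Csum_from a j n)) = Cmul r (Csub (a (n + j)%nat) (a j)).
Proof.
  pose proof (Csum_succ a j n) as E. simpl in E.
  assert (E2 : Csum_from a (S j) n = Csub (Cadd (Csum_from a j n) (a (n + j)%nat)) (a j)).
  { rewrite E. Ceq. }
  rewrite E2. Ceq.
Qed.

Lemma Cmod_opp a : Cmod (Copp a) = Cmod a.
Proof. unfold Cmod; simpl; f_equal; ring. Qed.

Lemma Cmul_cancel r a b : r <> 0 -> Cmul (RtoC r) a = Cmul (RtoC r) b -> a = b.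
Proof.
  intros Hr E. pose proof (f_equal Cre E) as E1. pose proof (f_equal Cim E) as E2.
  simpl in E1, E2. apply C_ext; apply (Rmult_eq_reg_l r); auto; lra.
Qed.

Theorem mainTheorem18 (V : CNormedSpace) (x : seqV V) (v : V) :
  bounded_seq V x ->
  strongly_almost_convergent V x v ->
  weakly_almost_convergent V x v.
Proof.
  intros Hxb Hsac f Hf.
  destruct Hf as [fadd [fscal [K HK]]].
  set (K' := Rmax K 1).
  assert (HK1 : 1 <= K') by apply Rmax_r.
  assert (HK' : forall u, Cmod (f u) <= K' * vnorm u).
  { intros u; eapply Rle_trans; [apply HK|]. apply Rmult_le_compat_r; [apply vnorm_nonneg|apply Rmax_l]. }
  destruct Hxb as [Mx HMx].
  split.
  { exists (K' * Mx); intros n. eapply Rle_trans; [apply HK'|]. apply Rmult_le_compat_l; [lra|auto]. }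
  intros eps Heps. apply NNPP; intro Hno.
  assert (Hbad : forall N, exists p : nat * nat, (N <= fst p)%nat /\ (0 < fst p)%nat /\
    eps < Cmod (Csub (Cmul (RtoC (/ INR (fst p))) (Csum_from (fun n => f (x n)) (snd p) (fst p))) (f v))).
  { intro N; apply NNPP; intro H; apply Hno; exists N; intros n Hn Hn0 j.
    apply Rnot_lt_le; intro; apply H; exists (n, j); simpl; auto. }
  set (nk := fun N => fst (proj1_sig (constructive_indefinite_description _ (Hbad N)))).
  set (jk := fun N => snd (proj1_sig (constructive_indefinite_description _ (Hbad N)))).
  assert (Hnk : forall k, (k <= nk k)%nat /\ (0 < nk k)%nat /\
    eps < Cmod (Csub (Cmul (RtoC (/ INR (nk k))) (Csum_from (fun n => f (x n)) (jk k) (nk k))) (f v))).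
  { intro k; exact (proj2_sig (constructive_indefinite_description _ (Hbad k))). }
  destruct ultrafilter_exists as [U [GU UU]].
  set (avg := fun (y : seqV V) k => Cmul (RtoC (/ INR (nk k))) (Csum_from (fun n => f (y n)) (jk k) (nk k))).
  set (Lim := fun y => epsilon (inhabits C0) (fun r => cl U (avg y) r)).
  set (L := fun y => Cmul (RtoC (/ K')) (Lim y)).
  assert (Hn0 : forall k, 0 < INR (nk k)).
  { intro k; apply lt_0_INR; apply Hnk. }
  assert (avg_bound : forall y M, (forall n, vnorm (y n) <= M) -> forall k, Cmod (avg y k) <= K' * M).
  { intros y M HM k. unfold avg. rewrite Cmod_mul, Cmod_RtoC.
    rewrite Rabs_right by (left; apply Rinv_0_lt_compat, Hn0).
    assert (Hs : Cmod (Csum_from (fun n => f (y n)) (jk k) (nk k)) <= INR (nk k) * (K' * M)).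
    { apply Csum_bound. intro i. eapply Rle_trans; [apply HK'|]. apply Rmult_le_compat_l; [lra|auto]. }
    specialize (Hn0 k).
    apply (Rmult_le_compat_l (/ INR (nk k))) in Hs; [|left; apply Rinv_0_lt_compat; auto].
    rewrite <- Rmult_assoc, Rinv_l in Hs by lra. lra. }
  assert (Lim_spec : forall y, bounded_seq V y -> cl U (avg y) (Lim y)).
  { intros y [M HM]. unfold Lim. apply epsilon_spec.
    apply (cl_exists U (avg y) (K' * M) GU UU). apply avg_bound; auto. }
  assert (Lim_eq : forall y r, bounded_seq V y -> cl U (avg y) r -> Lim y = r).
  { intros y r Hy H. apply (cl_unique U (avg y)); auto. }
  assert (HL : banach_limit_functional V L).
  { split; [|split; [|split]].
    - intros y z Hy Hz.
      assert (Hyz : bounded_seq V (seq_add V y z)).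
      { destruct Hy as [M1 H1], Hz as [M2 H2]; exists (M1 + M2); intro n; unfold seq_add.
        eapply Rle_trans; [apply vnorm_triangle|]. specialize (H1 n); specialize (H2 n); lra. }
      unfold L. rewrite (Lim_eq (seq_add V y z) (Cadd (Lim y) (Lim z)) Hyz); [Ceq|].
      apply (cl_ext U (fun k => Cadd (avg y k) (avg z k))); [|apply cl_add; auto].
      intro k; unfold avg, seq_add.
      rewrite (Csum_ext (fun n => f (vadd (y n) (z n))) (fun n => Cadd (f (y n)) (f (z n))))
        by (intro; apply fadd).
      rewrite Csum_add. Ceq.
    - intros a y Hy.
      assert (Hay : bounded_seq V (seq_scal V a y)).
      { destruct Hy as [M1 H1]; exists (Cmod a * M1); intro n; unfold seq_scal.
        rewrite vnorm_scal. apply Rmult_le_compat_l; [apply Cmod_ge0|auto]. }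
      unfold L. rewrite (Lim_eq (seq_scal V a y) (Cmul a (Lim y)) Hay); [Ceq|].
      apply (cl_ext U (fun k => Cmul a (avg y k))); [|apply cl_scal; auto].
      intro k; unfold avg, seq_scal.
      rewrite (Csum_ext (fun n => f (vscal a (y n))) (fun n => Cmul a (f (y n))))
        by (intro; apply fscal).
      rewrite Csum_scal. Ceq.
    - intros y M HM.
      assert (Hy : bounded_seq V y) by (exists M; auto).
      pose proof (cl_bound U (avg y) (Lim y) (K' * M) GU (Lim_spec y Hy) (avg_bound y M HM)) as Hb.
      unfold L. rewrite Cmod_mul, Cmod_RtoC.
      rewrite Rabs_right by (left; apply Rinv_0_lt_compat; lra).
      apply (Rmult_le_compat_l (/ K')) in Hb; [|left; apply Rinv_0_lt_compat; lra].
      rewrite <- Rmult_assoc, Rinv_l in Hb by lra. lra.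
    - intros y Hy.
      assert (Hsy : bounded_seq V (shift V y)).
      { destruct Hy as [M1 H1]; exists M1; intro n; unfold shift; auto. }
      unfold L. f_equal. apply Lim_eq; auto.
      apply (cl_near U (avg y)); auto.
      destruct Hy as [M HM].
      assert (HM0 : 0 <= M) by (eapply Rle_trans; [apply (vnorm_nonneg _ (y 0%nat))|apply HM]).
      intros e He. destruct (nat_unbounded (2 * K' * M / e)) as [N HN].
      exists N; intros k Hk.
      unfold avg, shift. rewrite (Csum_shiftf (fun n => f (y n))), Csum_diff.
      rewrite Cmod_mul, Cmod_RtoC.
      rewrite Rabs_right by (left; apply Rinv_0_lt_compat, Hn0).
      assert (Hd : Cmod (Csub (f (y (nk k + jk k)%nat)) (f (y (jk k)))) <= 2 * K' * M).
      { unfold Csub. eapply Rle_trans; [apply Cmod_triangle|]. rewrite Cmod_opp.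
        pose proof (HK' (y (nk k + jk k)%nat)); pose proof (HK' (y (jk k))).
        pose proof (HM (nk k + jk k)%nat); pose proof (HM (jk k)). nra. }
      assert (HNk : INR N <= INR (nk k)) by (apply le_INR; destruct (Hnk k); lia).
      specialize (Hn0 k).
      assert (2 * K' * M / e * e = 2 * K' * M) by (field; lra).
      assert (Hlt : 2 * K' * M < e * INR (nk k)) by nra.
      apply (Rmult_lt_reg_l (INR (nk k))); auto.
      rewrite <- Rmult_assoc, Rinv_r by lra.
      pose proof (Cmod_ge0 (Csub (f (y (nk k + jk k)%nat)) (f (y (jk k))))). nra. }
  specialize (Hsac L HL).
  assert (Hc : bounded_seq V (const_seq V v)) by (exists (vnorm v); intro; unfold const_seq; lra).
  assert (Lc : Lim (const_seq V v) = f v).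
  { apply Lim_eq; auto. apply (cl_ext U (fun _ => f v)); [|apply cl_const; auto].
    intro k. unfold avg, const_seq. rewrite Csum_const. specialize (Hn0 k).
    apply C_ext; simpl; field; lra. }
  unfold L in Hsac. apply Cmul_cancel in Hsac; [|apply Rinv_neq_0_compat; lra].
  rewrite Lc in Hsac.
  apply (cl_far U (avg x) (Lim x) (f v) eps GU (Lim_spec x (ex_intro _ Mx HMx)) Heps); auto.
  intro k; apply Hnk.
Qed.
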